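(* For every triple $(u,\lambda,v)\in\mathbb R^n\times\mathcal Q^*\times\mathbb R^n$ one has $\rho(u,\lambda,v)\ge0$. Moreover, whenever $\rho(u,\lambda,v)$ is finite, the infimum defining $\rho(u,\lambda,v)$ is attained.
   Context: Let $n,m\ge1$, $\mathcal Q:=\{(q_0,q_r)\in\mathbb R\times\mathbb R^m:\|q_r\|\le q_0\}$ and $\mathcal Q^*:=\{(q_0,q_r):\|q_r\|\le-q_0\}$. Let $g=(g_0,g_r):\mathbb R^n\to\mathbb R\times\mathbb R^m$ be $C^2$-smooth around $\bar x$; $\nabla g(\bar x)$ is its Jacobian and $\nabla^2 g(\bar x)(v,u)\in\mathbb R^{1+m}$ is the vector with components $v^T\nabla^2 g_i(\bar x)u$. The infimum function is $$\rho(u,\lambda,v):=\inf_{z\in\mathbb R^n}\Big\{-\lambda_0\Big(\|\nabla g_r(\bar x)z+\nabla^2 g_r(\bar x)(v,u)\|^2-\big(\nabla g_0(\bar x)z+\nabla^2 g_0(\bar x)(v,u)\big)^2\Big)\;\Big|\;\langle\lambda,\nabla g(\bar x)z+\nabla^2 g(\bar x)(v,u)\rangle=0\Big\},$$ with $\rho(u,\lambda,v):=+\infty$ if the constraint set is empty. *)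

(* Defs.v *)
From HB Require Import structures.
From mathcomp Require Import all_boot all_order all_algebra.
Set Implicit Arguments. Unset Strict Implicit. Unset Printing Implicit Defensive.
Import Order.TTheory GRing.Theory Num.Theory.
Local Open Scope ring_scope.

Section Rho.
Variable R : rcfType.

Definition enorm (m : nat) (x : 'cV[R]_m) : R := Num.sqrt (\sum_(i < m) x i 0 ^+ 2).

(* lambda = (lam0, lamr) in Q^* := {(q0,qr) : ||qr|| <= -q0} *)
Definition inQstar (m : nat) (lam0 : R) (lamr : 'cV[R]_m) : Prop :=
  enorm lamr <= - lam0.

(* v^T H u : the component of nabla^2 g_i(xbar)(v,u) given the Hessian H *)
Definition hess_term (n : nat) (H : 'M[R]_n) (v u : 'cV[R]_n) : R :=
  (v^T *m H *m u) 0 0.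

(* Data: Jacobian rows J0 = nabla g_0(xbar), Jr = nabla g_r(xbar) (m x n);
   Hessians H0 = nabla^2 g_0(xbar), Hr i = nabla^2 (g_r)_i(xbar). *)
Definition y0 (n : nat) (J0 : 'rV[R]_n) (H0 : 'M[R]_n) (u v : 'cV[R]_n)
  (z : 'cV[R]_n) : R := (J0 *m z) 0 0 + hess_term H0 v u.
Definition yr (n m : nat) (Jr : 'M[R]_(m, n)) (Hr : 'I_m -> 'M[R]_n) (u v : 'cV[R]_n)
  (z : 'cV[R]_n) : 'cV[R]_m := Jr *m z + \col_i hess_term (Hr i) v u.

Definition rho_feasible (n m : nat) (J0 : 'rV[R]_n) (Jr : 'M[R]_(m, n))
  (H0 : 'M[R]_n) (Hr : 'I_m -> 'M[R]_n) (u : 'cV[R]_n) (lam0 : R) (lamr : 'cV[R]_m)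
  (v : 'cV[R]_n) (z : 'cV[R]_n) : Prop :=
  lam0 * y0 J0 H0 u v z + \sum_(i < m) lamr i 0 * yr Jr Hr u v z i 0 = 0.

Definition rho_obj (n m : nat) (J0 : 'rV[R]_n) (Jr : 'M[R]_(m, n))
  (H0 : 'M[R]_n) (Hr : 'I_m -> 'M[R]_n) (u : 'cV[R]_n) (lam0 : R) (lamr : 'cV[R]_m)
  (v : 'cV[R]_n) (z : 'cV[R]_n) : R :=
  - lam0 * (enorm (yr Jr Hr u v z) ^+ 2 - y0 J0 H0 u v z ^+ 2).

End Rho.

Inductive ext (R : Type) := EFin of R | EPInf | ENInf.
Arguments EPInf {R}. Arguments ENInf {R}.

Definition ext_le (R : rcfType) (a b : ext R) : Prop :=
  match a, b with
  | _, EPInf => True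
  | ENInf, _ => True
  | EFin x, EFin y => x <= y
  | _, _ => False
  end.

(* is_inf S f e : e is the infimum (in the extended reals) of f over the set S,
   with the convention inf of the empty set = +oo. *)
Definition is_inf (T : Type) (R : rcfType) (S : T -> Prop) (f : T -> R) (e : ext R) : Prop :=
  match e with
  | EPInf => ~ (exists z, S z)
  | ENInf => (exists z, S z) /\ (forall r : R, exists z, S z /\ f z < r)
  | EFin r => (forall z, S z -> r <= f z) /\
              (forall r' : R, (forall z, S z -> r' <= f z) -> r' <= r)
  end.

Definition rho_is (R : rcfType) (n m : nat) (J0 : 'rV[R]_n) (Jr : 'M[R]_(m, n))
  (H0 : 'M[R]_n) (Hr : 'I_m -> 'M[R]_n) (u : 'cV[R]_n) (lam0 : R) (lamr : 'cV[R]_m)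
  (v : 'cV[R]_n) (e : ext R) : Prop :=
  is_inf (rho_feasible J0 Jr H0 Hr u lam0 lamr v) (rho_obj J0 Jr H0 Hr u lam0 lamr v) e.

(* Main.v *)
Require Import Defs.
From Stdlib Require Import Classical.
From HB Require Import structures.
From mathcomp Require Import all_boot all_order all_algebra ring.
Import Order.TTheory GRing.Theory Num.Theory.
Set Implicit Arguments. Unset Strict Implicit. Unset Printing Implicit Defensive.
Local Open Scope ring_scope.

Definition sq (R : rcfType) k (w : 'cV[R]_k) : R := (w^T *m w) 0 0.

Lemma sqE (R : rcfType) k (w : 'cV[R]_k) : sq w = \sum_i w i 0 ^+ 2.
Proof. by rewrite /sq mxE; apply: eq_bigr => i _; rewrite mxE expr2. Qed.

Lemma sq_ge0 (R : rcfType) k (w : 'cV[R]_k) : 0 <= sq w.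
Proof. by rewrite sqE; apply: sumr_ge0 => i _; rewrite sqr_ge0. Qed.

Lemma sq_eq0 (R : rcfType) k (w : 'cV[R]_k) : sq w = 0 -> w = 0.
Proof.
rewrite sqE => /eqP; rewrite psumr_eq0; last by move=> i _; rewrite sqr_ge0.
move/allP => H; apply/matrixP => i j; rewrite (ord1 j) mxE.
by have := H i (mem_index_enum _); rewrite /= sqrf_eq0 => /eqP.
Qed.

Lemma MtM0 (R : rcfType) k n (M : 'M[R]_(k, n)) : M^T *m M = 0 -> M = 0.
Proof.
move=> H; apply/matrixP => i j.
have : sq (col j M) = 0.
  have -> : sq (col j M) = (M^T *m M) j j.
    by rewrite /sq !mxE; apply: eq_bigr => l _; rewrite !mxE.
  by rewrite H mxE.
by move/sq_eq0/matrixP/(_ i 0); rewrite !mxE.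
Qed.

Lemma sqD (R : rcfType) k (p q : 'cV[R]_k) : sq (p + q) = sq p + 2 * (p^T *m q) 0 0 + sq q.
Proof.
rewrite /sq. rewrite (_ : (p + q)^T = p^T + q^T); last by apply/matrixP => i j; rewrite !mxE.
rewrite mulmxDl !mulmxDr !mxE.
have -> : \sum_j q^T 0 j * p j 0 = \sum_j p^T 0 j * q j 0.
  by apply: eq_bigr => j _; rewrite !mxE mulrC.
ring.
Qed.

Lemma least_squares (R : rcfType) k n (B : 'M[R]_(k, n)) (b : 'cV[R]_k) :
  exists x0, forall x, sq (B *m x0 + b) <= sq (B *m x + b).
Proof.
set N := B^T *m B.
have BC : B *m cokermx N = 0.
  apply: MtM0; rewrite trmx_mul -mulmxA (mulmxA B^T) -/N mulmx_coker.
  by rewrite mulmx0.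
have : (b^T *m B <= N)%MS by rewrite submxE -mulmxA BC mulmx0.
case/submxP => D HD.
exists (- D^T) => x.
have ortho : B^T *m (B *m - D^T + b) = 0.
  rewrite mulmxDr mulmxA -/N mulmxN.
  have -> : N *m D^T = (D *m N)^T by rewrite trmx_mul /N trmx_mul trmxK.
  by rewrite -HD trmx_mul trmxK addNr.
have -> : B *m x + b = B *m (x + D^T) + (B *m - D^T + b).
  by rewrite mulmxDr mulmxN addrA addrK.
rewrite (sqD (B *m (x + D^T))) -[B *m (x + D^T)]trmxK trmx_mul trmxK -mulmxA ortho mulmx0 mxE.
by rewrite mulr0 addr0 lerDr sq_ge0.
Qed.

Lemma sq_col (R : rcfType) k l (p : 'cV[R]_k) (q : 'cV[R]_l) :
  sq (col_mx p q) = sq p + sq q.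
Proof. by rewrite /sq tr_col_mx mul_row_col mxE. Qed.

Lemma enorm_sq (R : rcfType) k (x : 'cV[R]_k) : enorm x ^+ 2 = sq x.
Proof. by rewrite /enorm sqr_sqrtr -sqE ?sq_ge0. Qed.

Lemma sqZ (R : rcfType) k (c : R) (w : 'cV[R]_k) : sq (c *: w) = c ^+ 2 * sq w.
Proof. rewrite /sq (_ : (c *: w)^T = c *: w^T); last by apply/matrixP => i j; rewrite !mxE.
by rewrite -scalemxAl -scalemxAr !mxE mulrA expr2. Qed.

Lemma sq_key (R : rcfType) k (Y mu : 'cV[R]_k) :
  sq (Y - (mu^T *m Y) 0 0 *: mu) =
  sq Y - 2 * ((mu^T *m Y) 0 0) ^+ 2 + ((mu^T *m Y) 0 0) ^+ 2 * sq mu.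
Proof.
rewrite sqD -scaleNr sqZ sqrrN -scalemxAr mxE.
have -> : (Y^T *m mu) 0 0 = (mu^T *m Y) 0 0.
  by rewrite -[in RHS](trmxK Y) -[Y^T *m mu]trmxK trmx_mul trmxK mxE.
ring.
Qed.

Theorem lemma4p4 (R : rcfType) (n m : nat) (hn : (1 <= n)%N) (hm : (1 <= m)%N)
  (J0 : 'rV[R]_n) (Jr : 'M[R]_(m, n)) (H0 : 'M[R]_n) (Hr : 'I_m -> 'M[R]_n)
  (hH0 : H0^T = H0) (hHr : forall i, (Hr i)^T = Hr i)
  (u : 'cV[R]_n) (lam0 : R) (lamr : 'cV[R]_m) (v : 'cV[R]_n)
  (hlam : inQstar lam0 lamr) (e : ext R)
  (he : rho_is J0 Jr H0 Hr u lam0 lamr v e) :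
  ext_le (EFin 0) e /\
  (forall r : R, e = EFin r ->
     exists z : 'cV[R]_n, rho_feasible J0 Jr H0 Hr u lam0 lamr v z /\
                          rho_obj J0 Jr H0 Hr u lam0 lamr v z = r).
Proof.
set F := rho_feasible J0 Jr H0 Hr u lam0 lamr v.
set obj := rho_obj J0 Jr H0 Hr u lam0 lamr v.
set a := - lam0.
have a_ge0 : 0 <= a by apply: le_trans hlam; exact: sqrtr_ge0.
set Y := yr Jr Hr u v.
set h := \col_i hess_term (Hr i) v u.
set crow := lam0 *: J0 + lamr^T *m Jr.
set G := fun z => lam0 * y0 J0 H0 u v z + \sum_(i < m) lamr i 0 * Y z i 0.
have FG : forall z, F z <-> G z = 0 by [].
have crowE : forall w : 'cV_n, (crow *m w) 0 0 =
    lam0 * (J0 *m w) 0 0 + \sum_(i < m) lamr i 0 * (Jr *m w) i 0.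
  move=> w; rewrite /crow mulmxDl -scalemxAl -mulmxA.
  set X := Jr *m w; set x0 := J0 *m w.
  rewrite !mxE; congr (_ + _); apply: eq_bigr => i _; by rewrite mxE.
have GD : forall z w : 'cV_n, G (z + w) = G z + (crow *m w) 0 0.
  move=> z w; rewrite crowE /G /y0 /Y /yr.
  set hh := \col_i0 hess_term (Hr i0) v u.
  have -> : \sum_(i < m) lamr i 0 * (Jr *m (z + w) + hh) i 0 =
     \sum_(i < m) lamr i 0 * (Jr *m z + hh) i 0 +
     \sum_(i < m) lamr i 0 * (Jr *m w) i 0.
    rewrite -big_split; apply: eq_bigr => i _ /=.
    rewrite mulmxDr !mxE; ring.
  rewrite mulmxDr [(J0 *m z + J0 *m w) 0 0]mxE.
  ring.
have [nonneg minex] : (forall z, F z -> 0 <= obj z) /\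
   (forall z1, F z1 -> exists zs, F zs /\ forall z, F z -> obj zs <= obj z).
  have [a0|apos] := eqVneq a 0.
    have objE : forall z, obj z = 0.
      by move=> z; rewrite /obj /rho_obj -/a a0 mul0r.
    split; first by move=> z _; rewrite objE.
    by move=> z1 Fz1; exists z1; split => // z _; rewrite !objE.
  have a_gt0 : 0 < a by rewrite lt_def apos.
  set mu := a^-1 *: lamr.
  set c := fun z => (mu^T *m Y z) 0 0.
  have hs : forall z, \sum_(i < m) lamr i 0 * Y z i 0 = a * c z.
    move=> z; rewrite /c mxE mulr_sumr; apply: eq_bigr => i _.
    by rewrite [mu^T 0 i]mxE [mu i 0]mxE mulrA mulrA mulfV // mul1r.
  have Fc : forall z, F z -> y0 J0 H0 u v z = c z.
    move=> z0 Fz; have Gz : G z0 = 0 := Fz.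
    rewrite /G hs in Gz.
    have : a * (c z0 - y0 J0 H0 u v z0) = 0 by rewrite -Gz /a; ring.
    by move/eqP; rewrite mulf_eq0 (negbTE apos) /= subr_eq0 => /eqP.
  have sqmu : sq mu <= 1.
    have en0 : 0 <= enorm lamr by rewrite /enorm sqrtr_ge0.
    rewrite /mu sqZ -enorm_sq exprVn mulrC ler_pdivrMr ?exprn_gt0 // mul1r.
    by rewrite !expr2 ler_pM.
  set s := Num.sqrt (1 - sq mu).
  set Bm := col_mx (Jr - mu *m (mu^T *m Jr)) (s *: (mu^T *m Jr)).
  set bv := col_mx (h - mu *m (mu^T *m h)) (s *: (mu^T *m h)).
  have objE : forall z, F z -> obj z = a * sq (Bm *m z + bv).
    move=> z0 Fz.
    have Yz : Y z0 = Jr *m z0 + h by [].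
    have cm : c z0 *: mu = mu *m (mu^T *m Y z0).
      by rewrite [mu^T *m Y z0]mx11_scalar mul_mx_scalar.
    have e1 : Bm *m z0 + bv = col_mx (Y z0 - c z0 *: mu) (s *: (mu^T *m Y z0)).
      rewrite /Bm /bv mul_col_mx add_col_mx; congr col_mx.
        rewrite cm Yz mulmxBl mulmxDr -!mulmxA.
        by rewrite mulmxDr opprD addrACA.
      by rewrite -scalemxAl -scalerDr -mulmxA -mulmxDr Yz.
    rewrite e1 sq_col sq_key (sqZ s) (sqE (mu^T *m Y z0)) big_ord1.
    rewrite /obj /rho_obj -/a -/(Y z0) (Fc z0 Fz) enorm_sq.
    rewrite sqr_sqrtr ?subr_ge0 //.
    rewrite /c; ring.
  split; first by move=> z Fz; rewrite objE // mulr_ge0 // sq_ge0.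
  move=> z1 Fz1.
  set gam := (crow *m crow^T) 0 0.
  set K := 1%:M - gam^-1 *: (crow^T *m crow).
  have cK : crow *m K = 0.
    have [g0|gn0] := eqVneq gam 0.
      have : crow^T = 0 by apply: sq_eq0; rewrite /sq trmxK.
      by move=> /(congr1 trmx); rewrite trmxK trmx0 => ->; rewrite mul0mx.
    rewrite mulmxBr mulmx1 -scalemxAr mulmxA [crow *m crow^T]mx11_scalar -/gam.
    by rewrite mul_scalar_mx scalerA mulVf // scale1r subrr.
  have Kw : forall w : 'cV_n, crow *m w = 0 -> K *m w = w.
    move=> w cw; rewrite /K mulmxBl mul1mx -scalemxAl -mulmxA cw mulmx0.
    by rewrite scaler0 subr0.
  have [x0 Hx0] := least_squares (Bm *m K) (Bm *m z1 + bv).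
  have eB : forall w, Bm *m (z1 + K *m w) + bv = Bm *m K *m w + (Bm *m z1 + bv).
    by move=> w; rewrite mulmxDr mulmxA addrAC addrC.
  have Fzs : F (z1 + K *m x0).
    change (G (z1 + K *m x0) = 0); rewrite GD mulmxA cK mul0mx mxE addr0.
    exact: Fz1.
  exists (z1 + K *m x0); split => // z Fz.
  set w := z - z1.
  have cw : crow *m w = 0.
    have H : G (z1 + w) = G z1 + (crow *m w) 0 0 := GD _ _.
    have h00 : (crow *m w) 0 0 = 0.
      move: H; rewrite /w addrCA subrr addr0 (Fz : G z = 0) (Fz1 : G z1 = 0).
      by rewrite add0r => <-.
    by rewrite [crow *m w]mx11_scalar h00 raddf0.
  have zE : z = z1 + K *m w by rewrite Kw // /w addrC subrK.
  rewrite (objE _ Fzs) (objE _ Fz) zE !eB ler_pM2l //.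
split.
  case: e he => [r [_ glb]| //| [[z1 Fz1] H]] /=.
    apply: glb => z Fz; exact: nonneg.
  have [z [Fz]] := H 0; rewrite ltNge => /negP; apply; exact: nonneg.
move=> r er; rewrite er in he; case: he => [lb glb].
have [z1 Fz1] : exists z, F z.
  apply: NNPP => hne.
  have := glb (r + 1) (fun z Fz => False_ind _ (hne (ex_intro _ z Fz))).
  by rewrite gerDl ler10.
have [zs [Fzs Hzs]] := minex z1 Fz1.
exists zs; split => //; apply/eqP; rewrite eq_le lb // andbT.
by apply: glb.
Qed.
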